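(* For integers $a\geq1$ and $n\geq1$ let $f_{2n+1}(a)=\sum_{k=-(a-1)}^{a-1}\big(1-\frac{k^2}{a^2}\big)^{n}$. Then: (i) for every integer $a\geq1$, $f_3(a)=\frac{4a}{3}-\frac{1}{3a}$; (ii) for every $n\geq2$, as $a\to\infty$ ($a$ integer), $$f_{2n+1}(a)=\frac{2^{2n+1}(n!)^2}{(2n+1)!}\,a+o(a^{-2});$$ (iii) for every $n\geq2$, with $m=2n+1$, $p_k=f_{m}(a)^{-1}(1-k^2/a^2)^{n}$ for $|k|\leq a-1$ (and $p_k=0$ otherwise) and $U(a)=\sum_k k^2p_k$, one has, as $a\to\infty$, $$U(a)=\frac{a^2}{m+2}+o(a^{-1}).$$
   Context: $f_m(a)$ is the partition function of the discrete Tsallis maximizer with $q>1$, written with $m=\frac{q+1}{q-1}$ (so the exponent is $\frac{m-1}{2}=n$) and $a^2=k_BT$; $U$ is the mean energy (variance). *)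

(* Defs.v *)
From Stdlib Require Import Reals.
From Coquelicot Require Import Coquelicot.
Open Scope R_scope.

Definition weight (n a : nat) (k : R) : R := (1 - k ^ 2 / (INR a) ^ 2) ^ n.

(* f_{2n+1}(a) = sum_{k=-(a-1)}^{a-1} (1 - k^2/a^2)^n ;
   index j = 0 .. 2(a-1) corresponds to k = j - (a-1). *)
Definition fT (n a : nat) : R :=
  sum_f_R0 (fun j => weight n a (INR j - (INR a - 1))) (2 * (a - 1)).

Definition pT (n a : nat) (k : Z) : R :=
  if (Z.abs k <=? Z.of_nat a - 1)%Z then weight n a (IZR k) / fT n a else 0.

(* U(a) = sum_k k^2 p_k; p_k vanishes outside |k| <= a-1, so the sum is
   taken over that range: k = j - (a-1), j = 0 .. 2(a-1). *)
Definition UT (n a : nat) : R :=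
  sum_f_R0 (fun j => let k := (Z.of_nat j - (Z.of_nat a - 1))%Z in
                     IZR k ^ 2 * pT n a k) (2 * (a - 1)).

(* Main.v *)
Require Import Defs.
From Stdlib Require Import Reals Lra Lia.
From Coquelicot Require Import Coquelicot.
Open Scope R_scope.

Fixpoint L (n : nat) (h : nat -> R) : R :=
  match n with O => h O | S m => L m (fun i => h i - h (S i)) end.

Lemma L_ext n : forall h1 h2, (forall i, h1 i = h2 i) -> L n h1 = L n h2.
Proof. induction n; intros h1 h2 H; simpl; [apply H|]. apply IHn; intros; rewrite !H; auto. Qed.

Lemma L_lin n : forall c1 c2 h1 h2, L n (fun i => c1 * h1 i + c2 * h2 i) = c1 * L n h1 + c2 * L n h2.
Proof. induction n; intros; simpl; [auto|].
  rewrite <- IHn. apply L_ext; intros; ring. Qed.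

Lemma L_scal n c h : L n (fun i => c * h i) = c * L n h.
Proof. rewrite <- (Rplus_0_r (c * L n h)), <- (Rmult_0_l (L n h)) at 1.
  rewrite <- L_lin. apply L_ext; intros; ring. Qed.

Lemma L_plus n h1 h2 : L n (fun i => h1 i + h2 i) = L n h1 + L n h2.
Proof. transitivity (L n (fun i => 1 * h1 i + 1 * h2 i)). apply L_ext; intros; ring.
  rewrite L_lin; ring. Qed.

Lemma L_minus n h1 h2 : L n (fun i => h1 i - h2 i) = L n h1 - L n h2.
Proof. transitivity (L n (fun i => 1 * h1 i + (-1) * h2 i)). apply L_ext; intros; ring.
  rewrite L_lin; ring. Qed.

Lemma L_const n c : L (S n) (fun _ => c) = 0.
Proof. simpl. transitivity (L n (fun i => 0 * c)). apply L_ext; intros; ring.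
  rewrite L_scal; ring. Qed.

Lemma L_id n : L (S (S n)) (fun i => INR i) = 0.
Proof. change (L (S n) (fun i => INR i - INR (S i)) = 0).
  transitivity (L (S n) (fun _ => -1)). apply L_ext; intros; rewrite S_INR; ring.
  apply L_const. Qed.

Lemma L_sum n m : forall F : nat -> nat -> R,
  L n (fun i => sum_f_R0 (fun k => F k i) m) = sum_f_R0 (fun k => L n (F k)) m.
Proof. induction m; intros; simpl. apply L_ext; auto.
  rewrite L_plus, IHm; auto. Qed.

Lemma L_pow n : forall y, (1 - y) ^ n = L n (fun i => y ^ i).
Proof. induction n; intros; simpl. auto.
  rewrite IHn, <- L_scal. apply L_ext; intros; simpl; ring. Qed.

Lemma L_shift n : forall h, L (S n) h = L n h - L n (fun i => h (S i)).
Proof. induction n; intros; simpl. auto.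
  change (L (S n) (fun i => h i - h (S i)) = L (S n) h - L (S n) (fun i => h (S i))).
  rewrite IHn. simpl. rewrite <- !L_minus. apply L_ext; intros. ring. Qed.

Lemma L_bound n : forall h B, (forall i, (i <= n)%nat -> Rabs (h i) <= B) -> Rabs (L n h) <= 2 ^ n * B.
Proof. induction n; intros h B H; simpl. rewrite Rmult_1_l; apply H; lia.
  replace (2 * 2 ^ n * B) with (2 ^ n * (2 * B)) by ring. apply IHn. intros i Hi.
  unfold Rminus. eapply Rle_trans. apply Rabs_triang. rewrite Rabs_Ropp.
  assert (Rabs (h i) <= B) by (apply H; lia). assert (Rabs (h (S i)) <= B) by (apply H; lia). lra. Qed.

Fixpoint P (n : nat) (x : R) : R := match n with O => x | S k => P k x * (x + INR (S k)) end.

Lemma P_shift n : forall x, P (S n) x = x * P n (x + 1).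
Proof. induction n; intros; cbn [P]. simpl; ring.
  change (P (S n) x * (x + INR (S (S n))) = x * (P n (x+1) * (x + 1 + INR (S n)))).
  rewrite IHn. rewrite (S_INR (S n)). ring. Qed.

Lemma P_pos n : forall x, 0 < x -> 0 < P n x.
Proof. induction n; intros; cbn [P]. auto. apply Rmult_lt_0_compat; auto.
  pose proof (pos_INR (S n)); lra. Qed.

Lemma L_F n : forall x, 0 < x -> L n (fun i => / (x + INR i)) = INR (Factorial.fact n) / P n x.
Proof. induction n; intros x Hx. simpl. unfold Rdiv; rewrite Rplus_0_r; ring.
  rewrite L_shift. rewrite IHn by auto.
  rewrite (L_ext n _ (fun i => / ((x+1) + INR i))). 2:{ intros; rewrite S_INR; f_equal; ring. }
  rewrite IHn by lra.
  assert (E : P n (x+1) = P n x * (x + INR (S n)) / x).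
  { assert (H1 := P_shift n x). cbn [P] in H1. rewrite H1. field. lra. }
  rewrite E. cbn [P]. rewrite fact_simpl, mult_INR, S_INR.
  pose proof (P_pos n x Hx). pose proof (pos_INR n).
  field. repeat split; lra. Qed.

Definition G (p : nat) (x : R) : R := x ^ (S p) / INR (S p) - x ^ p / 2 + INR p * x ^ (pred p) / 12.
Definition D (p : nat) (x : R) : R := G p (x + 1) - G p x - x ^ p.

Lemma D4 x : D 4 x = / 30.
Proof. unfold D, G. simpl. field. Qed.
Lemma D2 x : D 2 x = 0.
Proof. unfold D, G. simpl. field. Qed.
Lemma D0 x : D 0 x = 0.
Proof. unfold D, G. simpl. field. Qed.

Lemma D_deriv p x : is_derive (D (S p)) x (INR (S p) * D p x).
Proof. unfold D, G. auto_derive. auto.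
  change (match p with 0%nat => 1 | S _ => INR p + 1 end) with (INR (S p)).
  rewrite !S_INR. simpl pow. pose proof (pos_INR p). field. lra. Qed.

Lemma D_bound q : exists K, 0 <= K /\ forall x, 0 <= x -> Rabs (D (q + 4) x) <= K * (1 + x) ^ q.
Proof. induction q.
- exists (/30). split. lra. intros x _. simpl. rewrite D4. rewrite Rabs_right; lra.
- destruct IHq as [K [HK HD]].
  exists (INR (S (q+4)) * K + Rabs (D (S q + 4) 0)). split.
  { pose proof (pos_INR (S (q+4))). pose proof (Rabs_pos (D (S q + 4) 0)). nra. }
  intros x Hx.
  assert (H1 : 1 <= (1 + x) ^ S q) by (apply pow_R1_Rle; lra).
  pose proof (Rabs_pos (D (S q + 4) 0)) as Hr.
  pose proof (pos_INR (S (q+4))) as Hi.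
  destruct (Req_dec x 0) as [->|Hx0].
  { assert (0 <= INR (S (q + 4)) * K * (1+0)^S q) by (apply Rmult_le_pos; [nra| lra]). nra. }
  destruct (MVT_cor2 (D (S q + 4)) (fun c => INR (S (q+4)) * D (q+4) c) 0 x) as [c [Hc Hc2]].
  { lra. }
  { intros c _. apply is_derive_Reals. apply D_deriv. }
  assert (E : D (S q + 4) x = D (S q + 4) 0 + INR (S (q + 4)) * D (q + 4) c * x) by lra.
  rewrite E. eapply Rle_trans. apply Rabs_triang.
  rewrite !Rabs_mult, (Rabs_right (INR _)) by lra. rewrite (Rabs_right x) by lra.
  assert (Hb : Rabs (D (q+4) c) <= K * (1 + x) ^ q).
  { eapply Rle_trans. apply HD; lra. apply Rmult_le_compat_l; auto. apply pow_incr; lra. }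
  assert (Hq : 0 <= (1+x)^q) by (apply pow_le; lra).
  simpl pow.
  assert (Rabs (D (q + 4) c) * x <= K * (1 + x) ^ q * (1 + x)) by (apply Rmult_le_compat; try lra; apply Rabs_pos).
  assert (Rabs (D (S q + 4) 0) <= Rabs (D (S q + 4) 0) * ((1 + x) * (1 + x) ^ q)).
  { simpl in H1. nra. }
  assert (INR (S (q + 4)) * (Rabs (D (q + 4) c) * x) <= INR (S (q + 4)) * (K * (1 + x) ^ q * (1 + x))) by (apply Rmult_le_compat_l; lra).
  nra.
Qed.

Lemma sum_le f m B : (forall k, (k <= m)%nat -> f k <= B) -> sum_f_R0 f m <= INR (S m) * B.
Proof. induction m; intros H. simpl. rewrite Rmult_1_l; apply H; lia.
  change (sum_f_R0 f m + f (S m) <= INR (S (S m)) * B).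
  rewrite (S_INR (S m)). assert (f (S m) <= B) by (apply H; lia).
  assert (sum_f_R0 f m <= INR (S m) * B) by (apply IHm; intros; apply H; lia).
  change (sum_f_R0 f m + f (S m) <= (INR (S m) + 1) * B). lra. Qed.

Lemma sum0 f m : (forall k, (k <= m)%nat -> f k = 0) -> sum_f_R0 f m = 0.
Proof. induction m; intros H. simpl. apply H; lia. simpl. rewrite IHm; [rewrite H; [ring|lia]| intros; apply H; lia]. Qed.

Lemma S_tele p m : sum_f_R0 (fun k => INR k ^ p) m = G p (INR (S m)) - G p 0 - sum_f_R0 (fun k => D p (INR k)) m.
Proof. induction m.
- simpl. unfold D. replace (0+1) with 1 by ring. ring.
- change (sum_f_R0 (fun k => INR k ^ p) m + INR (S m) ^ p = G p (INR (S (S m))) - G p 0 - (sum_f_R0 (fun k => D p (INR k)) m + D p (INR (S m)))).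
  rewrite IHm. replace (D p (INR (S m))) with (G p (INR (S m) + 1) - G p (INR (S m)) - INR (S m)^p) by reflexivity.
  rewrite (S_INR (S m)). ring. Qed.

Lemma sym (psi : R -> R) : (forall x, psi (- x) = psi x) -> forall m,
  sum_f_R0 (fun j => psi (INR j - INR m)) (2 * m) = 2 * sum_f_R0 (fun k => psi (INR k)) m - psi 0.
Proof. intros Hev. induction m.
- simpl. replace (0 - 0) with 0 by ring. ring.
- replace (2 * S m)%nat with (S (S (2 * m))) by lia.
  rewrite decomp_sum by lia. change (Init.Nat.pred (S (S (2 * m)))) with (S (2*m)). rewrite tech5.
  rewrite (sum_eq _ (fun j => psi (INR j - INR m))).
  2:{ intros; rewrite !S_INR; f_equal; ring. }
  rewrite IHm. 
  replace (INR 0 - INR (S m)) with (- INR (S m)) by (simpl; ring). rewrite Hev.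
  replace (INR (S (S (2 * m))) - INR (S m)) with (INR (S m)).
  2:{ rewrite !S_INR, mult_INR. simpl. ring. }
  change (sum_f_R0 (fun k => psi (INR k)) (S m)) with (sum_f_R0 (fun k => psi (INR k)) m + psi (INR (S m))).
  ring. Qed.

Definition T (i a : nat) : R := sum_f_R0 (fun j => (INR j - (INR a - 1)) ^ (2 * i)) (2 * (a - 1)).

Lemma T_S i m : T i (S m) = 2 * G (2*i) (INR (S m)) - 2 * G (2*i) 0 - 0 ^ (2*i) - 2 * sum_f_R0 (fun k => D (2*i) (INR k)) m.
Proof. unfold T. replace (S m - 1)%nat with m by lia.
  replace (INR (S m) - 1) with (INR m) by (rewrite S_INR; ring).
  rewrite (sym (fun x => x ^ (2 * i))). rewrite S_tele. ring.
  intros x. rewrite !pow_mult. f_equal. ring. Qed.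

Lemma Tbound i : exists K, forall m, INR (S m) ^ 3 * Rabs (T i (S m) - 2 * G (2*i) (INR (S m))) <= K * INR (S m) ^ (2*i).
Proof. destruct i as [|[|j]].
- exists 0. intros m.
  assert (E: T 0 (S m) - 2*G (2*0) (INR (S m)) = 0).
  { rewrite T_S, sum0; [unfold G; simpl; field | intros; apply D0]. }
  rewrite E, Rabs_R0. lra.
- exists 0. intros m.
  assert (E: T 1 (S m) - 2*G (2*1) (INR (S m)) = 0).
  { rewrite T_S, sum0; [unfold G; simpl; field | intros; apply D2]. }
  rewrite E, Rabs_R0. lra.
- destruct (D_bound (2 * j)) as [K [HK HD]].
  exists (2 * K). intros m.
  set (a := INR (S m)).
  assert (Ha : 1 <= a) by (unfold a; rewrite S_INR; pose proof (pos_INR m); lra).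
  replace (2 * S (S j))%nat with (2 * j + 4)%nat by lia.
  assert (E: T (S (S j)) (S m) - 2*G (2 * j + 4) a = - 2 * sum_f_R0 (fun k => D (2*j+4) (INR k)) m).
  { unfold a. replace (2 * j + 4)%nat with (2 * S (S j))%nat by lia. rewrite T_S.
    replace (G (2 * S (S j)) 0) with 0. rewrite pow_i by lia. ring.
    unfold G. rewrite !pow_i by lia. field. apply not_0_INR; lia. }
  rewrite E.
  assert (Hs : Rabs (sum_f_R0 (fun k => D (2*j+4) (INR k)) m) <= a * (K * a ^ (2 * j))).
  { eapply Rle_trans. apply sum_f_R0_triangle. apply sum_le. intros k Hk.
    eapply Rle_trans. apply HD. apply pos_INR. apply Rmult_le_compat_l; auto. apply pow_incr.
    split. pose proof (pos_INR k); lra. unfold a. rewrite S_INR. apply le_INR in Hk. lra. }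
  rewrite Rabs_mult. replace (Rabs (-2)) with 2 by (rewrite Rabs_left; lra).
  replace (2 * K * a ^ (2 * j + 4)) with (a^3 * (2 * (a * (K * a ^ (2 * j))))) .
  2:{ rewrite pow_add. simpl. ring. }
  apply Rmult_le_compat_l. apply pow_le; lra. lra.
Qed.

Lemma T0ex m : T 0 (S m) = 2 * G 0 (INR (S m)).
Proof. rewrite T_S, sum0; [unfold G; simpl; field | intros; apply D0]. Qed.
Lemma T1ex m : T 1 (S m) = 2 * G 2 (INR (S m)).
Proof. rewrite T_S, sum0; [unfold G; simpl; field | intros; apply D2]. Qed.

Lemma unif (Q w : nat -> nat -> R) : (forall i m, 0 <= w i m) ->
  (forall i, exists K, forall m, Q i m <= K * w i m) ->
  forall n, exists K, 0 <= K /\ forall i, (i <= n)%nat -> forall m, Q i m <= K * w i m.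
Proof. intros Hw HQ n. induction n.
- destruct (HQ 0%nat) as [K HK]. exists (Rmax K 0). split. apply Rmax_r.
  intros i Hi m. replace i with 0%nat by lia. eapply Rle_trans. apply HK.
  apply Rmult_le_compat_r. apply Hw. apply Rmax_l.
- destruct IHn as [K1 [HK1 H1]]. destruct (HQ (S n)) as [K2 HK2].
  exists (Rmax K1 K2). split. eapply Rle_trans; [apply HK1| apply Rmax_l].
  intros i Hi m. destruct (Nat.eq_dec i (S n)) as [->|Hne].
  + eapply Rle_trans. apply HK2. apply Rmult_le_compat_r. apply Hw. apply Rmax_r.
  + eapply Rle_trans. apply H1. lia. apply Rmult_le_compat_r. apply Hw. apply Rmax_l.
Qed.

Lemma bigN (X : R) : exists N : nat, X < INR N.
Proof. destruct (nfloor_ex (Rabs X) (Rabs_pos X)) as [n Hn]. exists (S n).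
  rewrite S_INR. pose proof (Rle_abs X). lra. Qed.

Lemma lim0 (u : nat -> R) B N0 : (forall m, (N0 <= m)%nat -> Rabs (u (S m)) <= B / INR (S m)) -> is_lim_seq u 0.
Proof. intros H. apply is_lim_seq_spec. intros eps.
  destruct (bigN (Rabs B / eps)) as [N HN]. exists (S (N + N0)). intros k Hk.
  destruct k as [|m]. lia. rewrite Rminus_0_r.
  eapply Rle_lt_trans. apply H. lia.
  pose proof (cond_pos eps) as He.
  assert (HN2 : INR N <= INR (S m)) by (apply le_INR; lia).
  assert (0 < INR (S m)) by (apply lt_0_INR; lia).
  apply Rmult_lt_reg_r with (INR (S m)); auto. unfold Rdiv. rewrite Rmult_assoc, Rinv_l by lra.
  assert (Rabs B < eps * INR N).
  { apply Rmult_lt_reg_r with (/ eps). apply Rinv_0_lt_compat; auto.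
    rewrite (Rmult_comm eps), Rmult_assoc, Rinv_r by lra. lra. }
  pose proof (Rle_abs B). nra. Qed.


Lemma wexp (x a : R) (i : nat) : a <> 0 -> (x ^ 2 / a ^ 2) ^ i = / a ^ (2 * i) * x ^ (2 * i).
Proof. intros Ha. unfold Rdiv. rewrite Rpow_mult_distr, !pow_mult, pow_inv. ring. Qed.

Lemma fT_L n m : fT n (S m) = L n (fun i => / INR (S m) ^ (2 * i) * T i (S m)).
Proof. unfold fT, weight, T. 
  rewrite (sum_eq _ (fun j => L n (fun i => ((INR j - (INR (S m) - 1)) ^ 2 / INR (S m) ^ 2) ^ i))).
  2:{ intros; apply L_pow. }
  rewrite <- L_sum. apply L_ext. intros i. rewrite scal_sum. apply sum_eq. intros j _.
  rewrite wexp. ring. apply not_0_INR; lia. Qed.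

Lemma N_L n m : sum_f_R0 (fun j => (INR j - (INR (S m) - 1)) ^ 2 * weight n (S m) (INR j - (INR (S m) - 1))) (2 * (S m - 1))
  = L n (fun i => / INR (S m) ^ (2 * i) * T (S i) (S m)).
Proof. unfold weight, T.
  rewrite (sum_eq _ (fun j => L n (fun i => (INR j - (INR (S m) - 1)) ^ 2 * ((INR j - (INR (S m) - 1)) ^ 2 / INR (S m) ^ 2) ^ i))).
  2:{ intros; rewrite L_pow, L_scal; auto. }
  rewrite <- L_sum. apply L_ext. intros i. rewrite scal_sum. apply sum_eq. intros j _.
  rewrite wexp. replace (2 * S i)%nat with (2 + 2 * i)%nat by lia. rewrite pow_add. ring. apply not_0_INR; lia. Qed.

Lemma UT_eq n m : UT n (S m) = sum_f_R0 (fun j => (INR j - (INR (S m) - 1)) ^ 2 * weight n (S m) (INR j - (INR (S m) - 1))) (2 * (S m - 1)) / fT n (S m).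
Proof. unfold UT, pT. unfold Rdiv. rewrite Rmult_comm, scal_sum. apply sum_eq. intros j Hj. cbv zeta.
  assert (Hz : (Z.abs (Z.of_nat j - (Z.of_nat (S m) - 1)) <=? Z.of_nat (S m) - 1)%Z = true).
  { apply Z.leb_le. lia. }
  rewrite Hz. rewrite !minus_IZR, <- !INR_IZR_INZ. simpl (IZR 1). ring. Qed.

Lemma Gcoef i a : 0 < a -> / a ^ (2 * i) * (2 * G (2 * i) a) = a * / (/2 + INR i) + (-1) + / (3 * a) * INR i.
Proof. intros Ha. destruct i as [|j].
- unfold G. simpl. field. lra.
- unfold G. replace (2 * S j)%nat with (S (S (2 * j))) by lia. cbn [pred pow].
  rewrite !S_INR, mult_INR. set (y := a ^ (2 * j)).
  assert (0 < y) by (apply pow_lt; auto). pose proof (pos_INR j). simpl (INR 2).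
  field. repeat split; lra. Qed.

Lemma Gcoef2 i a : 0 < a -> / a ^ (2 * i) * (2 * G (2 * S i) a) = a ^ 3 * / (3/2 + INR i) + (a / 3 - a ^ 2) + a / 3 * INR i.
Proof. intros Ha. 
  unfold G. replace (2 * S i)%nat with (S (S (2 * i))) by lia. cbn [pred pow].
  rewrite !S_INR, mult_INR. set (y := a ^ (2 * i)).
  assert (0 < y) by (apply pow_lt; auto). pose proof (pos_INR i). simpl (INR 2).
  field. repeat split; lra. Qed.

Lemma L_comb n (u v w : R) h : L (S (S n)) (fun i => u * h i + v + w * INR i) = u * L (S (S n)) h.
Proof. transitivity (L (S (S n)) (fun i => u * h i + 1 * (v * 1 + w * INR i))).
  apply L_ext; intros; ring. rewrite L_lin, L_lin, L_id.
  change (L (S (S n)) (fun _ => 1)) with (L (S (S n)) (fun _ : nat => 1)). rewrite L_const. ring. Qed.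

Lemma P_half n : P n (/2) = INR (Factorial.fact (2 * n + 1)) / (2 ^ (2 * n + 1) * INR (Factorial.fact n)).
Proof. induction n.
- simpl. field.
- cbn [P]. rewrite IHn.
  assert (F1 : INR (Factorial.fact (2 * S n + 1)) = (2 * INR n + 3) * (2 * INR n + 2) * INR (Factorial.fact (2 * n + 1))).
  { replace (2 * S n + 1)%nat with (S (S (2 * n + 1))) by lia.
    rewrite !fact_simpl, !mult_INR, !S_INR, plus_INR, mult_INR. simpl (INR 2). simpl (INR 1). ring. }
  assert (F2 : 2 ^ (2 * S n + 1) = 4 * 2 ^ (2 * n + 1)).
  { replace (2 * S n + 1)%nat with (2 + (2 * n + 1))%nat by lia. rewrite pow_add. simpl. ring. }
  rewrite F1, F2, fact_simpl, mult_INR, S_INR.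
  pose proof (pos_INR n). assert (0 < INR (Factorial.fact n)) by (apply lt_0_INR, Factorial.lt_O_fact).
  assert (0 < 2 ^ (2*n+1)) by (apply pow_lt; lra).
  field. repeat split; lra. Qed.

Lemma perr1 a x K k : 0 < a -> a ^ 3 * Rabs x <= K * a ^ k -> Rabs (/ a ^ k * x) <= K / a ^ 3.
Proof. intros Ha H. assert (0 < a ^ k) by (apply pow_lt; auto). assert (0 < a ^ 3) by (apply pow_lt; auto).
  rewrite Rabs_mult, Rabs_right by (left; apply Rinv_0_lt_compat; auto).
  apply Rmult_le_reg_l with (a ^ 3 * a ^ k). nra.
  replace (a ^ 3 * a ^ k * (/ a ^ k * Rabs x)) with (a ^ 3 * Rabs x) by (field; lra).
  replace (a ^ 3 * a ^ k * (K / a ^ 3)) with (K * a ^ k) by (field; lra). auto. Qed.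

Lemma perr2 a x K i : 0 < a -> a ^ 3 * Rabs x <= K * a ^ (2 * S i) -> Rabs (/ a ^ (2 * i) * x) <= K / a.
Proof. intros Ha H. replace (K / a) with (K * a ^ 2 / a ^ 3).
  apply perr1; auto. replace (K * a ^ 2 * a ^ (2 * i)) with (K * a ^ (2 * S i)); auto.
  replace (2 * S i)%nat with (2 + 2 * i)%nat by lia. rewrite pow_add; ring.
  simpl. field. lra. Qed.

Definition Q (i m : nat) : R := INR (S m) ^ 3 * Rabs (T i (S m) - 2 * G (2 * i) (INR (S m))).

Lemma Kunif n : exists K, 0 <= K /\ forall i, (i <= n)%nat -> forall m, Q i m <= K * INR (S m) ^ (2 * i).
Proof. apply (unif Q (fun i m => INR (S m) ^ (2 * i))).
  intros; apply pow_le, pos_INR. intros i; apply Tbound. Qed.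

Lemma f_err n K m : 0 <= K -> (forall i, (i <= n)%nat -> forall m, Q i m <= K * INR (S m) ^ (2 * i)) ->
  Rabs (fT n (S m) - L n (fun i => / INR (S m) ^ (2 * i) * (2 * G (2 * i) (INR (S m))))) <= 2 ^ n * (K / INR (S m) ^ 3).
Proof. intros HK H. rewrite fT_L, <- L_minus. apply L_bound. intros i Hi.
  replace (/ INR (S m) ^ (2 * i) * T i (S m) - / INR (S m) ^ (2 * i) * (2 * G (2 * i) (INR (S m))))
    with (/ INR (S m) ^ (2 * i) * (T i (S m) - 2 * G (2 * i) (INR (S m)))) by ring.
  apply perr1. apply lt_0_INR; lia. apply H; auto. Qed.

Lemma N_err n K m : 0 <= K -> (forall i, (i <= S n)%nat -> forall m, Q i m <= K * INR (S m) ^ (2 * i)) ->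
  Rabs (L n (fun i => / INR (S m) ^ (2 * i) * T (S i) (S m)) - L n (fun i => / INR (S m) ^ (2 * i) * (2 * G (2 * S i) (INR (S m))))) <= 2 ^ n * (K / INR (S m)).
Proof. intros HK H. rewrite <- L_minus. apply L_bound. intros i Hi.
  replace (/ INR (S m) ^ (2 * i) * T (S i) (S m) - / INR (S m) ^ (2 * i) * (2 * G (2 * S i) (INR (S m))))
    with (/ INR (S m) ^ (2 * i) * (T (S i) (S m) - 2 * G (2 * S i) (INR (S m)))) by ring.
  apply perr2. apply lt_0_INR; lia. apply (H (S i)); lia. Qed.

Lemma f_main n m : L (S (S n)) (fun i => / INR (S m) ^ (2 * i) * (2 * G (2 * i) (INR (S m))))
  = INR (S m) * (INR (Factorial.fact (S (S n))) / P (S (S n)) (/2)).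
Proof. assert (Ha : 0 < INR (S m)) by (apply lt_0_INR; lia).
  rewrite (L_ext _ _ (fun i => INR (S m) * / (/2 + INR i) + (-1) + / (3 * INR (S m)) * INR i)).
  2:{ intros; apply Gcoef; auto. }
  rewrite L_comb, L_F; auto. lra. Qed.

Lemma N_main n m : L (S (S n)) (fun i => / INR (S m) ^ (2 * i) * (2 * G (2 * S i) (INR (S m))))
  = INR (S m) ^ 3 * (INR (Factorial.fact (S (S n))) / P (S (S n)) (3/2)).
Proof. assert (Ha : 0 < INR (S m)) by (apply lt_0_INR; lia).
  rewrite (L_ext _ _ (fun i => INR (S m) ^ 3 * / (3/2 + INR i) + (INR (S m) / 3 - INR (S m) ^ 2) + INR (S m) / 3 * INR i)).
  2:{ intros; apply Gcoef2; auto. }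
  rewrite L_comb, L_F; auto. lra. Qed.

Lemma P32 n : P n (3/2) = 2 * P n (/2) * (/2 + INR (S n)).
Proof. pose proof (P_shift n (/2)) as H. cbn [P] in H. replace (/2 + 1) with (3/2) in H by field.
  lra. Qed.

Theorem theorem7 :
  (forall a : nat, (1 <= a)%nat -> fT 1 a = 4 * INR a / 3 - 1 / (3 * INR a)) /\
  (forall n : nat, (2 <= n)%nat ->
     is_lim_seq (fun a : nat =>
       (INR a) ^ 2 *
       (fT n a - 2 ^ (2 * n + 1) * (INR (Factorial.fact n)) ^ 2 / INR (Factorial.fact (2 * n + 1)) * INR a))
       0) /\
  (forall n : nat, (2 <= n)%nat ->
     is_lim_seq (fun a : nat =>
       INR a * (UT n a - (INR a) ^ 2 / (INR (2 * n + 1) + 2)))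
       0).
Proof. split; [|split].
- intros a Ha. destruct a as [|m]. lia. rewrite fT_L. cbn [L]. rewrite T0ex, T1ex.
  assert (0 < INR (S m)) by (apply lt_0_INR; lia). set (a := INR (S m)) in *. unfold G. simpl. field. lra.
- intros n Hn. destruct n as [|[|n]]; try lia. set (nn := S (S n)).
  assert (HC : 2 ^ (2 * nn + 1) * INR (Factorial.fact nn) ^ 2 / INR (Factorial.fact (2 * nn + 1)) = INR (Factorial.fact nn) / P nn (/2)).
  { rewrite P_half. assert (0 < INR (Factorial.fact nn)) by (apply lt_0_INR, Factorial.lt_O_fact).
    assert (0 < INR (Factorial.fact (2 * nn + 1))) by (apply lt_0_INR, Factorial.lt_O_fact).
    assert (0 < 2 ^ (2*nn+1)) by (apply pow_lt; lra). field. lra. }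
  rewrite HC. destruct (Kunif nn) as [K [HK HQ]].
  apply (lim0 _ (2 ^ nn * K) 0). intros m _.
  pose proof (f_err nn K m HK HQ) as E. unfold nn in E |- *. rewrite f_main in E.
  assert (Ha : 0 < INR (S m)) by (apply lt_0_INR; lia). set (a := INR (S m)) in *.
  set (C := INR (Factorial.fact (S (S n))) / P (S (S n)) (/ 2)) in *.
  rewrite Rabs_mult. rewrite (Rabs_right (a ^ 2)) by (apply Rle_ge, pow_le; lra).
  apply Rmult_le_compat_l with (r := a ^ 2) in E. 2:{ apply pow_le; lra. }
  replace (fT (S (S n)) (S m) - C * a) with (fT (S (S n)) (S m) - a * C) by ring.
  eapply Rle_trans. apply E. right. simpl. field. lra.
- intros n Hn. destruct n as [|[|n]]; try lia. set (nn := S (S n)).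
  destruct (Kunif (S nn)) as [K [HK HQ]].
  assert (HQ' : forall i, (i <= nn)%nat -> forall m, Q i m <= K * INR (S m) ^ (2 * i)) by (intros; apply HQ; lia).
  set (C := INR (Factorial.fact nn) / P nn (/ 2)).
  set (N0 := INR (Factorial.fact nn) / P nn (3/2)).
  set (r := / (INR (2 * nn + 1) + 2)).
  assert (Hr : 0 < r). { unfold r. apply Rinv_0_lt_compat. pose proof (pos_INR (2*nn+1)). lra. }
  assert (HC : 0 < C). { unfold C. apply Rdiv_lt_0_compat. apply lt_0_INR, Factorial.lt_O_fact. apply P_pos; lra. }
  assert (HN0 : N0 = C * r).
  { unfold N0, C, r. rewrite P32. rewrite plus_INR, mult_INR, S_INR. simpl (INR 2). simpl (INR 1).
    pose proof (P_pos nn (/2) ltac:(lra)). pose proof (pos_INR nn). field. lra. }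
  set (E := 2 ^ nn * K).
  assert (HE : 0 <= E) by (unfold E; apply Rmult_le_pos; [apply pow_le; lra| auto]).
  destruct (bigN (2 * E / C)) as [M HM].
  apply (lim0 _ (2 * E * (1 + r) / C) M). intros m Hm.
  assert (Ha : 0 < INR (S m)) by (apply lt_0_INR; lia).
  assert (HaM : 2 * E / C < INR (S m)). { apply Rlt_le_trans with (INR M); auto. apply le_INR; lia. }
  assert (Ha1 : 1 <= INR (S m)) by (rewrite S_INR; pose proof (pos_INR m); lra).
  pose proof (f_err nn K m HK HQ') as Ef. unfold nn in Ef. rewrite f_main in Ef. fold nn in Ef.
  pose proof (N_err nn K m HK HQ) as En. unfold nn in En. rewrite N_main in En. fold nn in En.
  rewrite UT_eq. rewrite N_L.
  fold C in Ef. fold N0 in En.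
  set (a := INR (S m)) in *.
  set (f := fT nn (S m)) in *.
  set (Nn := L nn (fun i => / a ^ (2 * i) * T (S i) (S m))) in *.
  set (e1 := Nn - a ^ 3 * N0). set (e2 := f - a * C).
  assert (He1 : Rabs e1 <= E / a) by (unfold e1, E; unfold Rdiv; rewrite Rmult_assoc; exact En).
  assert (He2 : Rabs e2 <= E / a ^ 3) by (unfold e2, E; unfold Rdiv; rewrite Rmult_assoc; exact Ef).
  assert (Ha3 : a <= a ^ 3) by (simpl; nra).
  assert (He2' : Rabs e2 <= E / a).
  { eapply Rle_trans. apply He2. apply Rmult_le_compat_l; auto. apply Rinv_le_contravar; lra. }
  assert (HEa : E / a <= C * a / 2).
  { apply Rmult_le_reg_l with (2 * a / C). apply Rdiv_lt_0_compat; lra.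
    replace (2 * a / C * (E / a)) with (2 * E / C) by (field; lra).
    replace (2 * a / C * (C * a / 2)) with (a * a) by (field; lra). nra. }
  assert (Hf : C * a / 2 <= f).
  { pose proof (Rle_abs (- e2)) as Hq. rewrite Rabs_Ropp in Hq. assert (e2 = f - a * C) as He by reflexivity. lra. }
  assert (Hf0 : 0 < f) by nra.
  replace (a * (Nn / f - a ^ 2 / (INR (2 * nn + 1) + 2))) with (a * (e1 - r * a ^ 2 * e2) / f).
  2:{ unfold e1, e2, r. rewrite HN0. unfold r. field. pose proof (pos_INR (2 * nn + 1)). lra. }
  unfold Rdiv at 1. rewrite Rabs_mult, Rabs_mult, (Rabs_right a) by lra.
  rewrite (Rabs_right (/ f)) by (left; apply Rinv_0_lt_compat; lra).
  assert (HX : Rabs (e1 - r * a ^ 2 * e2) <= E * (1 + r) / a).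
  { unfold Rminus. eapply Rle_trans. apply Rabs_triang. rewrite Rabs_Ropp, !Rabs_mult.
    rewrite (Rabs_right r), (Rabs_right (a^2)) by (apply Rle_ge; try apply pow_le; lra).
    assert (a ^ 2 * Rabs e2 <= E / a).
    { apply Rmult_le_reg_l with (/ a ^ 2). apply Rinv_0_lt_compat, pow_lt; lra.
      replace (/ a ^ 2 * (a ^ 2 * Rabs e2)) with (Rabs e2) by (field; lra).
      replace (/ a ^ 2 * (E / a)) with (E / a ^ 3) by (simpl; field; lra). auto. }
    replace (E * (1 + r) / a) with (E / a + r * (E / a)) by (field; lra).
    assert (r * (a ^ 2 * Rabs e2) <= r * (E / a)) by (apply Rmult_le_compat_l; lra).
    rewrite Rmult_assoc. lra. }
  assert (HCa : 0 < C * a / 2) by nra.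
  apply Rle_trans with (a * (E * (1 + r) / a) * / (C * a / 2)).
  { apply Rmult_le_compat. apply Rmult_le_pos; [lra | apply Rabs_pos].
    left; apply Rinv_0_lt_compat; lra.
    apply Rmult_le_compat_l; lra. apply Rinv_le_contravar; lra. }
  right. field. split; lra.
Qed.
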